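(* For every unweighted congestion game $\mathcal{G}$ with affine latency functions, $\mathrm{Apx}^1_\emptyset(\mathcal{G})\le 2+\sqrt{5}$.
   Context: A weighted congestion game consists of a finite set $[n]=\{1,\dots,n\}$ of players, a finite set $E$ of resources, for each player $i$ a weight $w_i>0$ and a nonempty finite strategy set $\Sigma_i\subseteq 2^E$, and for each resource $e$ a latency function $\ell_e:\mathbb{R}_{\ge 0}\to\mathbb{R}_{\ge 0}$. It is unweighted if $w_i=1$ for all $i$. Affine latency functions means $\ell_e(x)=\alpha_e x+\beta_e$ with $\alpha_e,\beta_e\ge 0$. For a (possibly partial) profile in which each player in some subset $P\subseteq[n]$ has chosen a strategy $s_i$, the congestion of $e$ is $L_e=\sum_{i\in P:\,e\in s_i}w_i$ and the cost of a player $i\in P$ is $\sum_{e\in s_i}\ell_e(L_e)$. For a full profile $S$, $\mathrm{SUM}(S)=\sum_{i\in[n]}c_i(S)$ and $S^*$ minimizes $\mathrm{SUM}$. A one-round walk from the empty strategy profile: starting with no player having chosen a strategy, the players arrive one at a time in some order, and each arriving player selects a best response, i.e., a strategy in her strategy set minimizing her cost given the strategies already chosen by the previously arrived players (later players not yet present); the outcome is the full profile after all $n$ players have chosen. $\mathrm{Apx}^1_\emptyset(\mathcal{G})$ is the maximum, over all orderings of the players and all choices among best responses, of $\mathrm{SUM}(\text{outcome})/\mathrm{SUM}(S^* )$. *)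

(* Defs.v *)
From HB Require Import structures.
From mathcomp Require Import all_boot all_order all_algebra all_fingroup.
Set Implicit Arguments. Unset Strict Implicit. Unset Printing Implicit Defensive.
Import Order.TTheory GRing.Theory Num.Theory.
Local Open Scope ring_scope.

Section CG.
Variables (R : rcfType) (n : nat) (E : finType).
Variables (alpha beta : E -> R).

Definition profile := 'I_n -> {set E}.

(* congestion of e when only the players in P are present (unweighted: w_i = 1) *)
Definition load (S : profile) (P : {set 'I_n}) (e : E) : nat :=
  #|[set j in P | e \in S j]|.

Definition lat (e : E) (x : nat) : R := alpha e * x%:R + beta e.

Definition pcost (S : profile) (P : {set 'I_n}) (i : 'I_n) : R :=
  \sum_(e in S i) lat e (load S P e).

Definition SUM (S : profile) : R := \sum_(i < n) pcost S setT i.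

Definition upd (S : profile) (i : 'I_n) (s : {set E}) : profile :=
  fun j => if j == i then s else S j.

Definition feasible (Sigma : 'I_n -> {set {set E}}) (S : profile) : Prop :=
  forall i, S i \in Sigma i.

Definition prev (sigma : {perm 'I_n}) (k : 'I_n) : {set 'I_n} :=
  [set sigma j | j in [set j : 'I_n | (j < k)%N]].

(* S is an outcome of a one-round walk from the empty profile with arrival
   order sigma (sigma k = the k-th arriving player): each arriving player
   picks a best response against the previously arrived players. *)
Definition one_round_outcome (Sigma : 'I_n -> {set {set E}})
    (sigma : {perm 'I_n}) (S : profile) : Prop :=
  feasible Sigma S /\
  forall k : 'I_n, forall s, s \in Sigma (sigma k) ->
    pcost S (sigma k |: prev sigma k) (sigma k)
      <= pcost (upd S (sigma k) s) (sigma k |: prev sigma k) (sigma k).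

Definition optimal (Sigma : 'I_n -> {set {set E}}) (S : profile) : Prop :=
  feasible Sigma S /\ forall S', feasible Sigma S' -> SUM S <= SUM S'.
End CG.

(* Main.v *)
Require Import Defs.
From HB Require Import structures.
From mathcomp Require Import all_boot all_order all_algebra all_fingroup.
From mathcomp Require Import ring lra.
Import Order.TTheory GRing.Theory Num.Theory.
Set Implicit Arguments. Unset Strict Implicit. Unset Printing Implicit Defensive.
Local Open Scope ring_scope.


Lemma sqrt5_facts (R : rcfType) : Num.sqrt (5:R) * Num.sqrt 5 = 5 /\ 2 < Num.sqrt (5:R).
Proof.
have h5 : Num.sqrt (5:R) ^+ 2 = 5 by rewrite sqr_sqrtr.
rewrite expr2 in h5; split=> //. have h0 : 0 <= Num.sqrt (5:R) := sqrtr_ge0 _.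
nra.
Qed.

Definition f2 (R : rcfType) (s X O : R) :=
  (s-1)*X^+2 - 2*(1+s)*O*X + 2*(2+s)*O^+2 + (1+s)*X - 2*(1+s)*O.

Lemma keyf (R : rcfType) (s : R) (x o : nat) : s * s = 5 -> 2 < s ->
  0 <= f2 s x%:R o%:R.
Proof.
move=> h5 h2; rewrite /f2.
have hX : 0 <= (x%:R : R) by rewrite ler0n.
case: o => [|[|o]].
- rewrite mulr0n; nra.
- rewrite mulr1n.
  have -> : (s-1)*x%:R^+2 - 2*(1+s)*1*x%:R + 2*(2+s)*1^+2 + (1+s)*x%:R - 2*(1+s)*1
     = (x%:R-1)*((s-1)*x%:R - 2) :> R by ring.
  case: x hX => [|[|x]] hX.
  + rewrite mulr0n; nra.
  + rewrite mulr1n; nra.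
  + have hX2 : 2 <= (x.+2%:R : R) by rewrite ler_nat.
    nra.
- have hO : 2 <= (o.+2%:R : R) by rewrite ler_nat.
  set O := (o.+2%:R : R); set X := (x%:R : R).
  have hs1 : 0 < s - 1 by lra.
  suff : 0 <= 4*(s-1)*((s-1)*X^+2 - 2*(1+s)*O*X + 2*(2+s)*O^+2 + (1+s)*X - 2*(1+s)*O).
    rewrite pmulr_rge0 //; lra.
  have -> : 4*(s-1)*((s-1)*X^+2 - 2*(1+s)*O*X + 2*(2+s)*O^+2 + (1+s)*X - 2*(1+s)*O)
     = (2*(s+1)*O - 2*(s-1)*X - (s+1))^+2 + (8*s-8)*O - 6 - 2*s
       + (s*s-5)*(4*O^+2 - 4*O - 1) by ring.
  rewrite h5 subrr mul0r addr0.
  have := sqr_ge0 (2*(s+1)*O - 2*(s-1)*X - (s+1)).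
  nra.
Qed.

Section Comb.
Variables (R : rcfType) (n : nat) (E : finType) (alpha beta : E -> R).

Lemma exch (T : profile n E) (g : E -> R) :
  \sum_(i < n) \sum_(e in T i) g e = \sum_e (load T setT e)%:R * g e.
Proof.
rewrite (eq_bigr (fun i => \sum_e (if e \in T i then g e else 0))); last first.
  by move=> i _; rewrite big_mkcond.
rewrite exchange_big; apply: eq_bigr => e _.
rewrite -big_mkcond /= mulr_natl -sumr_const.
by apply: eq_bigl => j; rewrite !inE.
Qed.

Definition Phi2 (S : profile n E) (Q : {set 'I_n}) : R :=
  \sum_e (alpha e * ((load S Q e)%:R * ((load S Q e)%:R + 1)) + 2 * beta e * (load S Q e)%:R).

Lemma loadU1 (S : profile n E) (Q : {set 'I_n}) i e : i \notin Q ->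
  load S (i |: Q) e = (load S Q e + (e \in S i))%N.
Proof.
move=> iQ; rewrite /load.
case: (boolP (e \in S i)) => eS.
- have -> : [set j in i |: Q | e \in S j] = i |: [set j in Q | e \in S j].
    apply/setP => j; rewrite !inE; case: (eqVneq j i) => [->|] //=.
  by rewrite cardsU1 inE (negbTE iQ) /= addnC.
- have -> : [set j in i |: Q | e \in S j] = [set j in Q | e \in S j].
    apply/setP => j; rewrite !inE; case: (eqVneq j i) => [->|] //=.
    by rewrite (negbTE eS) andbF.
  by rewrite addnC.
Qed.

Lemma Phi2U1 (S : profile n E) (Q : {set 'I_n}) i : i \notin Q ->
  Phi2 S (i |: Q) = Phi2 S Q + 2 * pcost alpha beta S (i |: Q) i.
Proof.
move=> iQ; rewrite /Phi2 /pcost [X in _ + 2 * X]big_mkcond mulr_sumr -big_split /=.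
apply: eq_bigr => e _; rewrite !loadU1 //.
case: (e \in S i) => /=.
  by rewrite /lat !natrD; ring.
by rewrite addn0 mulr0 addr0.

Qed.

Lemma Phi2_0 (S : profile n E) : Phi2 S set0 = 0.
Proof.
rewrite /Phi2 big1 // => e _.
have -> : load S set0 e = 0%N by rewrite /load; apply/eqP; rewrite cards_eq0; apply/eqP/setP => j; rewrite !inE.
by rewrite mul0r !mulr0 addr0.
Qed.

Definition pre (sigma : {perm 'I_n}) (m : nat) : {set 'I_n} :=
  [set sigma j | j in [set j : 'I_n | (j < m)%N]].

Lemma Phi2_pre (S : profile n E) (sigma : {perm 'I_n}) m : (m <= n)%N ->
  Phi2 S (pre sigma m) =
  2 * \sum_(j < n | (j < m)%N) pcost alpha beta S (sigma j |: Defs.prev sigma j) (sigma j).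
Proof.
elim: m => [|m IH] hm.
- have -> : pre sigma 0 = set0.
    by apply/setP => i; rewrite inE; apply/imsetP => -[j]; rewrite inE.
  by rewrite Phi2_0 big_pred0 ?mulr0.

- have hmn : (m < n)%N by [].
  set om := Ordinal hmn.
  have hpre : pre sigma m.+1 = sigma om |: pre sigma m.
    rewrite /pre; apply/setP => i; rewrite in_setU1.
    apply/imsetP/orP.
    + move=> [j]; rewrite inE ltnS leq_eqVlt => /orP [/eqP hj|hj] ->.
        by left; apply/eqP; congr (sigma _); apply/val_inj.
      by right; apply/imsetP; exists j; rewrite ?inE.
    + case => [/eqP ->|/imsetP [j]]; first by exists om; rewrite ?inE.
      by rewrite inE => hj ->; exists j; rewrite // inE ltnW.
  have hnot : sigma om \notin pre sigma m.
    apply/imsetP => -[j]; rewrite inE => hj /perm_inj hjo.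
    by move: hj; rewrite -hjo ltnn.
  rewrite hpre (Phi2U1 _ hnot) (IH (ltnW hm)).
  rewrite [in RHS](bigD1 om); last by rewrite ltnSn.
  rewrite mulrDr addrC; congr (_ + _).
  congr (2 * _); apply: eq_bigl => j.
  rewrite -val_eqE /= ltnS andbC.
  by case: ltngtP.
Qed.

End Comb.

Lemma load_upd (n : nat) (E : finType) (S : profile n E) i s P e :
  (load (upd S i s) P e <= (load S setT e).+1)%N.
Proof.
rewrite /load; apply: leq_trans
  (subset_leq_card (_ : _ \subset i |: [set j in setT | e \in S j])) _.
  apply/subsetP => j; rewrite !inE /upd; case: eqP => //= _.
  by case/andP.
by rewrite cardsU1 -add1n leq_add2r leq_b1.
Qed.

Theorem mainTheorem7 (R : rcfType) (n : nat) (E : finType)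
  (Sigma : 'I_n -> {set {set E}}) (alpha beta : E -> R)
  (hSigma : forall i, Sigma i != set0)
  (halpha : forall e, 0 <= alpha e) (hbeta : forall e, 0 <= beta e)
  (sigma : {perm 'I_n}) (S Sopt : profile n E)
  (hS : one_round_outcome alpha beta Sigma sigma S)
  (hopt : optimal alpha beta Sigma Sopt) :
  SUM alpha beta S <= (2 + Num.sqrt 5) * SUM alpha beta Sopt.
Proof.
move: hS => [hfeas hBR]; move: hopt => [hfo _].
have [h5 h2] := sqrt5_facts R; set s := Num.sqrt (5:R) in h5 h2 *.
pose x e := ((load S setT e)%:R : R).
pose o e := ((load Sopt setT e)%:R : R).
have hC : SUM alpha beta S = \sum_e x e * (alpha e * x e + beta e).
  by rewrite /SUM /pcost exch.
have hO : SUM alpha beta Sopt = \sum_e o e * (alpha e * o e + beta e).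
  by rewrite /SUM /pcost exch.
have hpreT : pre sigma n = setT.
  apply/setP => i; rewrite inE; apply/imsetP; exists (sigma^-1 i)%g.
    by rewrite inE.
  by rewrite permKV.
have hPhi : Phi2 alpha beta S setT =
   2 * \sum_(j < n) pcost alpha beta S (sigma j |: Defs.prev sigma j) (sigma j).
  rewrite -hpreT Phi2_pre //; congr (2 * _); apply: eq_bigl => j; exact: ltn_ord.
pose g i := \sum_(e in Sopt i) (alpha e * (x e + 1) + beta e).
have hA : \sum_(j < n) pcost alpha beta S (sigma j |: Defs.prev sigma j) (sigma j)
          <= \sum_e o e * (alpha e * (x e + 1) + beta e).
  apply: (@le_trans _ _ (\sum_(j < n) g (sigma j))).
    apply: ler_sum => j _.
    apply: le_trans (hBR j _ (hfo (sigma j))) _.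
    have hu : upd S (sigma j) (Sopt (sigma j)) (sigma j) = Sopt (sigma j).
      by rewrite /upd eqxx.
    rewrite /pcost /g hu; apply: ler_sum => e _; rewrite /lat; apply: lerD => //.
    by apply: ler_wpM2l => //; rewrite /x natr1 ler_nat load_upd.
  rewrite -(reindex_inj (@perm_inj _ sigma) (P := predT) (F := g)) /g.
  by rewrite exch.
have key : forall e, 2 * (x e * (alpha e * x e + beta e)) <=
   2*(2+s) * (o e * (alpha e * o e + beta e)) +
   (1+s) * ((alpha e * (x e * (x e + 1)) + 2 * beta e * x e)
            - 2 * (o e * (alpha e * (x e + 1) + beta e))).
  move=> e; rewrite -subr_ge0.
  have -> : 2*(2+s) * (o e * (alpha e * o e + beta e)) +
   (1+s) * ((alpha e * (x e * (x e + 1)) + 2 * beta e * x e)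
            - 2 * (o e * (alpha e * (x e + 1) + beta e)))
    - 2 * (x e * (alpha e * x e + beta e))
    = alpha e * f2 s (x e) (o e) + beta e * (2 * (o e + s * x e)).
    by rewrite /f2; ring.
  have hx : 0 <= x e by rewrite /x ler0n.
  have ho : 0 <= o e by rewrite /o ler0n.
  apply: addr_ge0; apply: mulr_ge0 => //; first exact: keyf.
  nra.
have hsum := @ler_sum _ _ (index_enum E) (fun e => e \in E) _ _ (fun e _ => key e).
rewrite -mulr_sumr -hC big_split /= -!mulr_sumr sumrB -mulr_sumr -hO in hsum.
have hP : Phi2 alpha beta S setT =
  \sum_e (alpha e * (x e * (x e + 1)) + 2 * beta e * x e) by [].
rewrite -hP hPhi in hsum.
set A := \sum_(j < n) _ in hsum hA.
set B := \sum_e _ in hsum hA.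
have hneg : (1 + s) * (2 * A - 2 * B) <= 0.
  rewrite mulr_ge0_le0 //; lra.
lra.
Qed.
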